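(* Let $n \geq 2$ be an integer, let $p(x) \in \mathcal{T}_n$, and let $q(x) \in \mathcal{J}(p(x))$. Then $q(x) = \gcd(p(x), p'(x)) \cdot f(x)$ for some monic real-rooted integer polynomial $f(x)$ that interlaces $\mathrm{Min}(p,x)$.
   Context: A nonzero real polynomial is real-rooted if all its complex roots are real. For $n\ge1$, a Seidel trace polynomial of degree $n$ is a real-rooted polynomial $p(x)=\sum_{i=0}^n a_i x^{n-i}\in\mathbb{Z}[x]$ of degree $n$ with $a_0=1$, $a_1=0$, and $a_2=-\binom{n}{2}$ if $n\ge2$; $\mathcal{T}_n$ is the set of these. For real-rooted $p,q$ with $\deg p = m$, $\deg q = m-1$, roots $\lambda_1\le\dots\le\lambda_m$ of $p$ and $\mu_1\le\dots\le\mu_{m-1}$ of $q$, we say $q$ interlaces $p$ if $\lambda_i \le \mu_i \le \lambda_{i+1}$ for all $i\in\{1,\dots,m-1\}$. For $p\in\mathcal{T}_n$, $\mathcal{J}(p(x))$ is the set of integer polynomials $q(x)$ of degree $n-1$ with $q\in\mathcal{T}_{n-1}$ and $q$ interlacing $p$. Here $\gcd(p(x),p'(x))$ is the monic gcd, and $\mathrm{Min}(p,x) := p(x)/\gcd(p(x),p'(x))$, which is monic with simple roots, the same set of roots as $p$. *)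

(* Defs.v *)
From HB Require Import structures.
From mathcomp Require Import all_boot all_order all_algebra all_field.
Set Implicit Arguments. Unset Strict Implicit. Unset Printing Implicit Defensive.
Import Order.TTheory GRing.Theory Num.Theory.
Local Open Scope ring_scope.

Definition toC (p : {poly int}) : {poly algC} := map_poly (fun z : int => z%:~R) p.

Definition real_rooted (p : {poly algC}) : Prop :=
  p != 0 /\ forall z : algC, root p z -> z \is Num.real.

Definition sorted_roots (p : {poly algC}) (s : seq algC) : Prop :=
  all (fun z => z \is Num.real) s /\ sorted <=%R s /\
  p = lead_coef p *: \prod_(z <- s) ('X - z%:P).

Definition interlaces (q p : {poly algC}) : Prop :=
  real_rooted p /\ real_rooted q /\ (size q).+1 = size p /\
  exists (ls ms : seq algC), sorted_roots p ls /\ sorted_roots q ms /\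
    forall i : nat, (i < size ms)%N -> ls`_i <= ms`_i /\ ms`_i <= ls`_i.+1.

(* Seidel trace polynomials of degree n: p = sum_i a_i x^(n-i), integer,
   monic (a_0 = 1), a_1 = 0, a_2 = -C(n,2) if n >= 2, real-rooted. *)
Definition seidel_trace (n : nat) (p : {poly int}) : Prop :=
  (1 <= n)%N /\ size p = n.+1 /\ p`_n = 1 /\ p`_n.-1 = 0 /\
  ((2 <= n)%N -> p`_(n.-2) = - ('C(n, 2))%:Z) /\ real_rooted (toC p).

Definition J_set (n : nat) (p q : {poly int}) : Prop :=
  seidel_trace n.-1 q /\ interlaces (toC q) (toC p).

Definition mgcd (p q : {poly algC}) : {poly algC} :=
  (lead_coef (gcdp p q))^-1 *: gcdp p q.

Definition Minp (p : {poly algC}) : {poly algC} := p %/ mgcd p p^`().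

(* Main.v *)
Require Import Defs.
From HB Require Import structures.
From mathcomp Require Import all_boot all_order all_algebra all_field.
From mathcomp Require Import ring.
Set Implicit Arguments. Unset Strict Implicit. Unset Printing Implicit Defensive.
Import Order.TTheory GRing.Theory Num.Theory.
Local Open Scope ring_scope.
Fixpoint grs (ls ms : seq algC) : seq algC :=
  match ms, ls with
  | m :: ms', l :: ls' => if l == head 0 ls' then m :: grs ls' ms' else grs ls' ms'
  | _, _ => [::] end.
Fixpoint frs (ls ms : seq algC) : seq algC :=
  match ms, ls with
  | m :: ms', l :: ls' => if l == head 0 ls' then frs ls' ms' else m :: frs ls' ms'
  | _, _ => [::] end.
Fixpoint dss (ls ms : seq algC) : seq algC :=
  match ms, ls with
  | m :: ms', l :: ls' => if l == head 0 ls' then dss ls' ms' else l :: dss ls' ms'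
  | _, _ => ls end.
Fixpoint IL (ls ms : seq algC) : Prop :=
  match ms, ls with
  | [::], ls => size ls = 1%N
  | m :: ms', l :: ls' => l <= m /\ m <= head 0 ls' /\ IL ls' ms'
  | _ :: _, [::] => False end.

Lemma IL_of_idx ms ls : size ls = (size ms).+1 ->
  (forall i, (i < size ms)%N -> ls`_i <= ms`_i /\ ms`_i <= ls`_i.+1) -> IL ls ms.
Proof.
elim: ms ls => [|m ms IH] [|l ls] //= [] Hs H.
split; first by case: (H 0%N).
split; first by case: (H 0%N) => // _; rewrite nth0.
by apply: IH => // i Hi; apply: (H i.+1).
Qed.

Lemma IL_ne ls ms : IL ls ms -> ls != [::].
Proof. by case: ms ls => [|m ms] [|l ls]. Qed.

Lemma perm_mid (x:algC) s t u : perm_eq s (t ++ u) -> perm_eq (x :: s) (t ++ x :: u).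
Proof. by move=> H; rewrite perm_sym -[t ++ x :: u]/(t ++ [:: x] ++ u) perm_catCA /= perm_cons perm_sym. Qed.

Lemma perm_ms ms ls : IL ls ms -> perm_eq ms (grs ls ms ++ frs ls ms).
Proof.
elim: ms ls => [|m ms IH] [|l ls] //= [_ [_ H]].
case: ifP => _ /=; first by rewrite perm_cons IH.
exact/perm_mid/IH.
Qed.

Lemma perm_ls ms ls : IL ls ms -> perm_eq ls (grs ls ms ++ dss ls ms).
Proof.
elim: ms ls => [|m ms IH] [|l ls] //= [H1 [H2 H]].
case: ifP => /eqP E /=.
  have -> : m = l by apply/le_anti; rewrite H1 E H2.
  by rewrite perm_cons IH.
exact/perm_mid/IH.
Qed.

Lemma subseq_dss ms ls : subseq (dss ls ms) ls.
Proof.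
elim: ms ls => [|m ms IH] [|l ls]; rewrite ?subseq_refl //=.
case: ifP => _; last by rewrite /= eqxx IH.
exact: (subseq_trans (IH ls) (subseq_cons ls l)).
Qed.

Lemma subseq_frs ms ls : subseq (frs ls ms) ms.
Proof.
elim: ms ls => [|m ms IH] [|l ls]; rewrite ?sub0seq //=.
case: ifP => _; last by rewrite /= eqxx IH.
exact: (subseq_trans (IH ls) (subseq_cons ms m)).
Qed.

Lemma size_dss ms ls : IL ls ms -> size (dss ls ms) = (size (frs ls ms)).+1.
Proof.
elim: ms ls => [|m ms IH] [|l ls] //= [H1 [H2 H]].
by case: ifP => _ /=; rewrite IH.
Qed.

Lemma head_dss ms ls : IL ls ms -> head 0 (dss ls ms) = head 0 ls.
Proof.
elim: ms ls => [|m ms IH] [|l ls] //= [H1 [H2 H]].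
by case: ifP => // /eqP ->; rewrite IH.
Qed.

Lemma sub_dss ms ls : IL ls ms -> {subset ls <= dss ls ms}.
Proof.
elim: ms ls => [|m ms IH] [|l ls] //=; try by move=> *.
move=> [H1 [H2 H]] x.
case: ifP => [/eqP E|_].
  rewrite inE => /orP [/eqP ->|]; last exact: IH.
  apply: IH => //; rewrite E; case: ls H {E H2} => [|a ls] H.
    by have := IL_ne H.
  by rewrite /= inE eqxx.
by rewrite !inE => /orP [->//|/IH ->]; rewrite ?orbT.
Qed.

Lemma uniq_dss ms ls : IL ls ms -> sorted <=%R ls -> uniq (dss ls ms).
Proof.
elim: ms ls => [|m ms IH] [|l ls] //=; first by case: ls.
move=> [H1 [H2 H]] Hs.
have Hs' : sorted <=%R ls := path_sorted Hs.
case: ifP => [_|/negbT E]; first exact: IH.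
rewrite /= IH // andbT; apply/negP => /(mem_subseq (subseq_dss ms ls)) Hl.
case: ls Hs Hs' Hl E {H H2 IH} => //= a ls /andP [Hla Hp] _.
rewrite inE => /orP [/eqP ->|Hl]; first by rewrite eqxx.
have := order_path_min le_trans Hp => /allP /(_ _ Hl) Hal.
by rewrite (@le_anti _ _ l a) ?Hla ?Hal ?eqxx.
Qed.

Lemma interl_dss ms ls : IL ls ms -> forall i, (i < size (frs ls ms))%N ->
  (dss ls ms)`_i <= (frs ls ms)`_i /\ (frs ls ms)`_i <= (dss ls ms)`_i.+1.
Proof.
elim: ms ls => [|m ms IH] [|l ls] //= [H1 [H2 H]].
case: ifP => _ /=; first exact: IH.
case=> [|i] /= Hi; last exact: IH.
by rewrite nth0 head_dss.
Qed.
Lemma mup_monotone x (a b : {poly algC}) : b != 0 -> a %| b -> (mup x a <= mup x b)%N.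
Proof.
move=> b0 ab; have a0 : a != 0.
  by apply: contra b0 => /eqP a0; move: ab; rewrite a0 dvd0p.
by rewrite mup_geq //; apply: dvdp_trans ab; rewrite -mup_geq.
Qed.

Lemma mup_XsubC1 x r : mup x ('X - r%:P : {poly algC}) = (r == x).
Proof. by have := mup_XsubCX 1 x r; rewrite expr1 => ->; case: (r == x). Qed.

Lemma prod_dvdp (s : seq algC) b : b != 0 ->
  (forall x, (count_mem x s <= mup x b)%N) -> \prod_(z <- s) ('X - z%:P) %| b.
Proof.
elim: s b => [|r s IH] b b0 H; first by rewrite big_nil dvd1p.
have: (0 < mup r b)%N by apply: leq_trans (H r); rewrite /= eqxx.
rewrite -XsubC_dvd // => /dvdpP [b' Db].
have b'0 : b' != 0 by apply: contra b0; rewrite Db => /eqP ->; rewrite mul0r.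
rewrite big_cons Db [b' * _]mulrC dvdp_mul2l ?polyXsubC_eq0 //.
apply: IH => // x; have := H x; rewrite Db mupM ?polyXsubC_eq0 // mup_XsubC1 /=.
by case: (r == x) => /=; rewrite ?add0n ?addn0 ?addn1.
Qed.

Lemma mup_dvdp (a b : {poly algC}) : a != 0 -> b != 0 ->
  (forall x, (mup x a <= mup x b)%N) -> a %| b.
Proof.
move=> a0 b0 H; have [s Da] := closed_field_poly_normal a.
have l0 : lead_coef a != 0 by rewrite lead_coef_eq0.
rewrite Da dvdpZl //; apply: prod_dvdp => // x; have := H x.
rewrite {1}Da -mul_polyC mupM ?polyC_eq0 ?monic_neq0 ?monic_prod_XsubC //.
by rewrite mupNroot ?rootC // mu_prod_XsubC.
Qed.

Lemma mup_deriv x (p : {poly algC}) m : p != 0 -> mup x p = m.+1 ->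
  p^`() != 0 /\ mup x p^`() = m.
Proof.
move=> p0 Hm; have [k [r]] := multiplicity_XsubC p x; rewrite p0 /= => rx Dp.
have Hk : k = m.+1 by rewrite -Hm Dp mupMr // mup_XsubCX eqxx.
have Dp' : p^`() = (r^`() * ('X - x%:P) + r * m.+1%:R%:P) * ('X - x%:P) ^+ m.
  rewrite Dp Hk derivM deriv_exp derivXsubC mul1r /= exprS polyC_natr -mulr_natr; ring.


have hx : ~~ root (r^`() * ('X - x%:P) + r * m.+1%:R%:P) x.
  rewrite /root !hornerE subrr mulr0 add0r mulf_neq0 //.
  by rewrite pnatr_eq0.
have h0 : r^`() * ('X - x%:P) + r * m.+1%:R%:P != 0.
  by apply: contra hx => /eqP ->; rewrite root0.
split; first by rewrite Dp' mulf_neq0 // expf_neq0 // polyXsubC_eq0.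
by rewrite Dp' mupMr // mup_XsubCX eqxx.
Qed.

Lemma prod_cat (s t : seq algC) :
  \prod_(z <- s ++ t) ('X - z%:P) = \prod_(z <- s) ('X - z%:P) * \prod_(z <- t) ('X - z%:P).
Proof. by rewrite big_cat. Qed.

Lemma mgcd_prod (ls gs ds : seq algC) : perm_eq ls (gs ++ ds) -> uniq ds ->
  {subset ls <= ds} -> ls != [::] ->
  mgcd (\prod_(z <- ls) ('X - z%:P)) (\prod_(z <- ls) ('X - z%:P))^`()
  = \prod_(z <- gs) ('X - z%:P).
Proof.
move=> Hp Hu Hs Hne.
set Pl := \prod_(z <- ls) _; set G := \prod_(z <- gs) _.
have Pl0 : Pl != 0 by rewrite monic_neq0 ?monic_prod_XsubC.
have G0 : G != 0 by rewrite monic_neq0 ?monic_prod_XsubC.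
have memds : forall x, (x \in ds) = (x \in ls).
  move=> x; apply/idP/idP => [H|/Hs //].
  by rewrite (perm_mem Hp) mem_cat H orbT.
have cnt : forall x, count_mem x ls = (count_mem x gs + (x \in ls))%N.
  by move=> x; rewrite (permP Hp) count_cat (count_uniq_mem _ Hu) memds.
have mPl : forall x, mup x Pl = count_mem x ls by move=> x; rewrite mu_prod_XsubC.
have key : forall x, x \in ls -> Pl^`() != 0 /\ mup x Pl^`() = count_mem x gs.
  by move=> x Hx; have := cnt x; rewrite Hx addn1 -mPl => /(mup_deriv Pl0).
have hx0 : head 0 ls \in ls by case: (ls) Hne => //= a l _; rewrite mem_head.
have [Pl'0 _] := key _ hx0.
have key2 : forall x, x \notin ls -> count_mem x gs = 0%N /\ mup x Pl = 0%N.
  move=> x Hx; have := cnt x; rewrite (negbTE Hx) addn0 mPl => <-.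
  by have /count_memPn -> := Hx.
have PlE : Pl = G * \prod_(z <- ds) ('X - z%:P) by rewrite /Pl (perm_big _ Hp) prod_cat.
set g := gcdp Pl Pl^`().
have g0 : g != 0 by rewrite gcdp_eq0 negb_and Pl0.
have Gg : G %| g.
  rewrite dvdp_gcd {1}PlE dvdp_mulr //=; apply: mup_dvdp => // x.
  rewrite mu_prod_XsubC; case: (boolP (x \in ls)) => Hx.
    by rewrite (proj2 (key _ Hx)).
  by rewrite (proj1 (key2 _ Hx)).
have gG : g %| G.
  apply: mup_dvdp => // x; rewrite mu_prod_XsubC; case: (boolP (x \in ls)) => Hx.
    by rewrite -(proj2 (key _ Hx)) mup_monotone // dvdp_gcdr.
  by rewrite (proj1 (key2 _ Hx)) -(proj2 (key2 _ Hx)) mup_monotone // dvdp_gcdl.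
have lg0 : lead_coef g != 0 by rewrite lead_coef_eq0.
apply/eqP; rewrite -eqp_monic ?monic_prod_XsubC //.
  apply: eqp_trans (eqp_scale _ _) _; first by rewrite invr_eq0.
  by rewrite /eqp Gg gG.
by rewrite monicE lead_coefZ mulVf.
Qed.
Lemma toCM a b : toC (a * b) = toC a * toC b.
Proof. by rewrite /toC rmorphM. Qed.
Lemma toCZ c a : toC (c *: a) = c%:~R *: toC a.
Proof. by rewrite /toC map_polyZ. Qed.
Lemma toC_lead a : lead_coef (toC a) = (lead_coef a)%:~R.
Proof. by rewrite /toC lead_coef_map_inj //; apply: intr_inj. Qed.
Lemma toC_rat a : toC a = map_poly ratr (map_poly (intr : int -> rat) a).
Proof. by rewrite /toC -map_poly_comp; apply: eq_map_poly => z /=; rewrite ratr_int. Qed.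
Lemma int_factor (p q : {poly int}) (Q : {poly algC}) : toC p != 0 -> q != 0 ->
  toC q = mgcd (toC p) (toC p)^`() * Q -> exists f : {poly int}, toC f = Q.
Proof.
move=> p0 q0 Hq.
have Mm : mgcd (toC p) (toC p)^`() \is monic.
  by rewrite monicE /mgcd lead_coefZ mulVf // lead_coef_eq0 gcdp_eq0 negb_and p0.
set pQ := map_poly (intr : int -> rat) p.
set g := gcdp pQ pQ^`().
have Gm : mgcd (toC p) (toC p)^`() = map_poly ratr ((lead_coef g)^-1 *: g).
  by rewrite /mgcd !toC_rat deriv_map -gcdp_map lead_coef_map map_polyZ fmorphV.
have : (lead_coef g)^-1 *: g %| map_poly (intr : int -> rat) q.
  by rewrite -(@dvdp_map _ algC ratr) -toC_rat Hq Gm dvdp_mulr.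
move/dvdpP_rat_int => [p1 [a a0 gE] [r qE]].
have p10 : p1 != 0 by apply: contra q0; rewrite qE => /eqP ->; rewrite mul0r.
have tp10 : toC p1 != 0.
  by rewrite -lead_coef_eq0 toC_lead intr_eq0 lead_coef_eq0.
have Gm2 : mgcd (toC p) (toC p)^`() = ratr a *: toC p1.
  by rewrite Gm gE map_polyZ toC_rat.
have ra0 : ratr a != 0 :> algC by rewrite fmorph_eq0.
have Hl : ratr a * (lead_coef p1)%:~R = 1 :> algC.
  by have := Mm; rewrite monicE Gm2 lead_coefZ toC_lead => /eqP.
have : toC p1 * toC r = toC p1 * (ratr a *: Q).
  by rewrite -toCM -qE Hq Gm2 -scalerAl scalerAr.
move/(mulfI tp10) => Hr.
exists (lead_coef p1 *: r); rewrite toCZ Hr scalerA.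
have -> : (lead_coef p1)%:~R * ratr a = 1 :> algC by rewrite mulrC.
by rewrite scale1r.
Qed.

Theorem proposition4p2 (n : nat) (p q : {poly int}) :
  (2 <= n)%N -> seidel_trace n p -> J_set n p q ->
  exists f : {poly int},
    f \is monic /\ real_rooted (toC f) /\
    toC q = mgcd (toC p) (toC p)^`() * toC f /\
    interlaces (toC f) (Minp (toC p)).
Proof.
move=> n2 [_ [sp [pn [_ [_ rrp]]]]]
  [[_ [sq [qn _]]] [_ [_ [Hsz [ls [ms [[rls [sls Dp]] [[rms [sms Dq]] Hidx]]]]]]]].
have lp : lead_coef (toC p) = 1 by rewrite toC_lead lead_coefE sp /= pn.
have lq : lead_coef (toC q) = 1.
  by rewrite toC_lead lead_coefE sq /= qn.
rewrite lp scale1r in Dp; rewrite lq scale1r in Dq.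
have Hsz' : size ls = (size ms).+1.
  by move: Hsz; rewrite Dp Dq !size_prod_XsubC => -[].
have HIL := IL_of_idx Hsz' Hidx.
have HG : mgcd (toC p) (toC p)^`() = \prod_(z <- grs ls ms) ('X - z%:P).
  by rewrite Dp; apply: (mgcd_prod (perm_ls HIL) (uniq_dss HIL sls) (sub_dss HIL) (IL_ne HIL)).
have G0 : \prod_(z <- grs ls ms) ('X - z%:P) != 0 :> {poly algC}.
  by rewrite monic_neq0 ?monic_prod_XsubC.
have Hq : toC q = \prod_(z <- grs ls ms) ('X - z%:P) * \prod_(z <- frs ls ms) ('X - z%:P).
  by rewrite Dq (perm_big _ (perm_ms HIL)) prod_cat.
have HD : Minp (toC p) = \prod_(z <- dss ls ms) ('X - z%:P).
  by rewrite /Minp HG Dp (perm_big _ (perm_ls HIL)) prod_cat mulKp.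
have p0 : toC p != 0 by rewrite -lead_coef_eq0 lp oner_eq0.
have q0 : q != 0 by rewrite -size_poly_gt0 sq.
have [f Hf] := int_factor p0 q0 (etrans Hq (congr1 (fun x => x * _) (esym HG))).
have realF : real_rooted (\prod_(z <- frs ls ms) ('X - z%:P)).
  split; first by rewrite monic_neq0 ?monic_prod_XsubC.
  move=> z; rewrite root_prod_XsubC => /(mem_subseq (subseq_frs ms ls)) Hz.
  exact: (allP rms).
have realD : real_rooted (\prod_(z <- dss ls ms) ('X - z%:P)).
  split; first by rewrite monic_neq0 ?monic_prod_XsubC.
  move=> z; rewrite root_prod_XsubC => /(mem_subseq (subseq_dss ms ls)) Hz.
  exact: (allP rls).
exists f; split.
  rewrite monicE; apply/eqP; apply: (@intr_inj algC).
  by rewrite -toC_lead Hf (monicP (monic_prod_XsubC _ _ _)).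
split; first by rewrite Hf.
split; first by rewrite HG Hf Hq.
rewrite Hf HD; split => //; split => //; split.
  by rewrite !size_prod_XsubC size_dss.
exists (dss ls ms), (frs ls ms); split.
  split; first by apply/allP => z /(mem_subseq (subseq_dss ms ls)); apply/allP.
  split; first exact: (subseq_sorted le_trans (subseq_dss ms ls)).
  by rewrite (monicP (monic_prod_XsubC _ _ _)) scale1r.
split.
  split; first by apply/allP => z /(mem_subseq (subseq_frs ms ls)); apply/allP.
  split; first exact: (subseq_sorted le_trans (subseq_frs ms ls)).
  by rewrite (monicP (monic_prod_XsubC _ _ _)) scale1r.
exact: interl_dss.
Qed.
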